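(* Let $X\in C^\infty(\mathbb T;\mathbb R)$ have at least one zero and no degenerate zero, and let $K^\pm$ be as below. For every sufficiently small $\sigma>0$ there exists a smooth function $\eta_\sigma:\mathbb T\to\mathbb R$ with $\eta_\sigma\equiv1$ on $K^+$, $\eta_\sigma\equiv0$ on $K^-$, and $$\Big|\frac{d}{dt}\Big|_{t=0}\eta_\sigma(X^t(x,\xi))\Big|=|X(x)\eta_\sigma'(x)|<\sigma\qquad\forall (x,\xi)\in\mathbb T\times\mathbb R,$$ where $X^t(x,\xi)$ is the $x$-component of the flow of $\mathcal X_h(x,\xi)=(X(x),-\xi X'(x))$.
   Context: $\mathbb T:=\mathbb R/2\pi\mathbb Z$; $K^+:=\{x:X(x)=0,X'(x)<0\}$, $K^-:=\{x:X(x)=0,X'(x)>0\}$. *)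

(* Defs.v *)
From Stdlib Require Import Reals.
From Coquelicot Require Import Coquelicot.
Open Scope R_scope.

(* A function on T = R/2piZ is represented by its 2pi-periodic lift to R. *)
Definition periodic2pi (f : R -> R) : Prop := forall x, f (x + 2 * PI) = f x.

Definition smooth (f : R -> R) : Prop := forall (n : nat) (x : R), ex_derive_n f n x.

Definition Kplus (X : R -> R) (x : R) : Prop := X x = 0 /\ Derive X x < 0.
Definition Kminus (X : R -> R) (x : R) : Prop := X x = 0 /\ Derive X x > 0.

Definition Xh (X : R -> R) (p : R * R) : R * R :=
  (X (fst p), - snd p * Derive X (fst p)).

Definition is_Xh_flow (X : R -> R) (Phi : R -> R * R -> R * R) : Prop :=
  forall p, Phi 0 p = p /\
    forall t, is_derive (fun s => fst (Phi s p)) t (fst (Xh X (Phi t p))) /\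
              is_derive (fun s => snd (Phi s p)) t (snd (Xh X (Phi t p))).

(* Main.v *)
Require Import Defs.
From Stdlib Require Import Reals.
From Coquelicot Require Import Coquelicot.
From Stdlib Require Import Lra Lia ZArith.
Open Scope R_scope.

Fixpoint Cn (n : nat) (f : R -> R) : Prop :=
  match n with O => True | S m => (forall x, ex_derive f x) /\ Cn m (Derive f) end.

Lemma Cn_ext n : forall f g, (forall x, f x = g x) -> Cn n f -> Cn n g.
Proof.
induction n as [|n IH]; simpl; intros f g E H; auto.
destruct H as [H1 H2]; split.
- intro x; apply ex_derive_ext with f; auto.
- apply IH with (Derive f); auto. intro; apply Derive_ext; auto.
Qed.

Lemma Cn_S n : forall f, Cn (S n) f -> Cn n f.
Proof.
induction n as [|n IH]; simpl; intros f H; auto.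
destruct H as [H1 H2]; split; auto.
Qed.

Lemma Cn_const n : forall c, Cn n (fun _ => c).
Proof.
induction n as [|n IH]; simpl; intros c; auto. split.
- intro; apply ex_derive_const.
- apply Cn_ext with (fun _ => 0); [intro; rewrite Derive_const; auto | apply IH].
Qed.

Lemma Cn_id n : Cn n (fun x => x).
Proof.
destruct n; simpl; auto. split.
- intro; apply ex_derive_id.
- apply Cn_ext with (fun _ => 1); [intro; rewrite Derive_id; auto | apply Cn_const].
Qed.

Lemma Cn_plus n : forall f g, Cn n f -> Cn n g -> Cn n (fun x => f x + g x).
Proof.
induction n as [|n IH]; simpl; intros f g Hf Hg; auto.
destruct Hf as [Hf1 Hf2]; destruct Hg as [Hg1 Hg2]. split.
- intro x; apply (ex_derive_plus f g x); auto.
- apply Cn_ext with (fun x => Derive f x + Derive g x).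
  + intro; rewrite Derive_plus; auto.
  + apply IH; auto.
Qed.

Lemma Cn_mult n : forall f g, Cn n f -> Cn n g -> Cn n (fun x => f x * g x).
Proof.
induction n as [|n IH]; intros f g Hf Hg; simpl; auto.
pose proof (Cn_S _ _ Hf) as Hf'. pose proof (Cn_S _ _ Hg) as Hg'.
destruct Hf as [Hf1 Hf2]; destruct Hg as [Hg1 Hg2]. split.
- intro; apply ex_derive_mult; auto.
- apply Cn_ext with (fun x => Derive f x * g x + f x * Derive g x).
  + intro; rewrite Derive_mult; auto.
  + apply Cn_plus; apply IH; auto.
Qed.

Lemma Cn_comp n : forall f g, Cn n f -> Cn n g -> Cn n (fun x => f (g x)).
Proof.
induction n as [|n IH]; intros f g Hf Hg; simpl; auto.
pose proof (Cn_S _ _ Hf) as Hf'. pose proof (Cn_S _ _ Hg) as Hg'.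
destruct Hf as [Hf1 Hf2]; destruct Hg as [Hg1 Hg2]. split.
- intro; apply ex_derive_comp; auto.
- apply Cn_ext with (fun x => Derive g x * Derive f (g x)).
  + intro x; rewrite (Derive_comp f g x); auto.
  + apply Cn_mult; auto.
Qed.

Lemma Cn_inv n : forall h, Cn n h -> (forall x, h x <> 0) -> Cn n (fun x => / h x).
Proof.
induction n as [|n IH]; intros h Hh Hnz; simpl; auto.
pose proof (Cn_S _ _ Hh) as Hh'.
destruct Hh as [Hh1 Hh2]. split.
- intro x; apply ex_derive_inv; auto.
- apply Cn_ext with (fun x => (-1 * Derive h x) * (/ h x * / h x)).
  + intro x; rewrite Derive_inv; auto. field. auto.
  + apply Cn_mult. apply Cn_mult; auto. apply Cn_const.
    apply Cn_mult; apply IH; auto.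
Qed.

Lemma Cn_exp n : Cn n exp.
Proof.
induction n as [|n IH]; simpl; auto. split.
- intro x; eexists; apply is_derive_exp.
- apply Cn_ext with exp; auto. intro x; symmetry; apply is_derive_unique, is_derive_exp.
Qed.

Lemma Cn_ln n : forall h, Cn n h -> (forall x, 0 < h x) -> Cn n (fun x => ln (h x)).
Proof.
destruct n as [|n]; intros h Hh Hp; simpl; auto.
pose proof (Cn_S _ _ Hh) as Hh'.
destruct Hh as [Hh1 Hh2].
assert (D : forall x, is_derive (fun x => ln (h x)) x (Derive h x * / h x)).
{ intro x. apply (is_derive_comp ln h x). apply is_derive_ln; auto.
  apply Derive_correct; auto. }
split.
- intro x; eexists; apply D.
- apply Cn_ext with (fun x => Derive h x * / h x).
  + intro x; symmetry; apply is_derive_unique, D.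
  + apply Cn_mult; auto. apply Cn_inv; auto. intro x; specialize (Hp x); lra.
Qed.

Lemma Derive_n_S f n x : Derive_n f (S n) x = Derive_n (Derive f) n x.
Proof.
replace (S n) with (n + 1)%nat by lia. rewrite <- Derive_n_comp. simpl.
apply Derive_n_ext. intro; apply Derive_ext; auto.
Qed.

Lemma Cn_smooth : forall n f, Cn n f -> forall x, ex_derive_n f n x.
Proof.
induction n as [|n IH]; intros f H x; simpl; auto.
destruct H as [H1 H2]. destruct n as [|n]; simpl. apply ex_derive_ext with f; auto.
apply ex_derive_ext with (Derive_n (Derive f) n).
intro; symmetry; apply Derive_n_S. apply (IH _ H2 x).
Qed.

Lemma smooth_Cn : forall n f, (forall k x, ex_derive_n f k x) -> Cn n f.
Proof.
induction n as [|n IH]; intros f H; simpl; auto. split.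
- intro x; apply ex_derive_ext with (Derive_n f 0); [auto| apply (H 1%nat x)].
- apply IH. intros [|k] x; simpl; auto.
  apply ex_derive_ext with (Derive_n f (S k)).
  intro; apply Derive_n_S. apply (H (S (S k)) x).
Qed.

Lemma periodic_nat f : periodic2pi f -> forall (n : nat) y, f (y + 2 * PI * INR n) = f y.
Proof.
intros Hp n; induction n as [|n IH]; intro y.
- simpl. f_equal; ring.
- rewrite S_INR. replace (y + 2 * PI * (INR n + 1)) with ((y + 2*PI*INR n) + 2 * PI) by ring.
  rewrite Hp; auto.
Qed.

Lemma periodic_Z f : periodic2pi f -> forall (z : Z) y, f (y + 2 * PI * IZR z) = f y.
Proof.
intros Hp z y. destruct (Z_le_gt_dec 0 z) as [h|h].
- rewrite <- (Z2Nat.id z h), <- INR_IZR_INZ. apply periodic_nat; auto.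
- replace z with (- Z.of_nat (Z.to_nat (- z)))%Z by lia.
  rewrite opp_IZR, <- INR_IZR_INZ.
  rewrite <- (periodic_nat f Hp (Z.to_nat (-z)) (y + 2 * PI * - INR (Z.to_nat (- z)))).
  f_equal; ring.
Qed.

Lemma periodic_reduce f : periodic2pi f -> forall x, exists y, 0 <= y <= 2 * PI /\ f x = f y.
Proof.
intros Hp x. pose proof PI_RGT_0 as HPI.
destruct (archimed (x / (2 * PI))) as [h1 h2].
set (k := (up (x / (2 * PI)) - 1)%Z).
exists (x + 2 * PI * IZR (- k)). split.
- rewrite opp_IZR. unfold k. rewrite minus_IZR.
  assert (x = 2 * PI * (x / (2 * PI))) by (field; lra).
  split; nra.
- symmetry; apply periodic_Z; auto.
Qed.

Lemma periodic_bounded f : periodic2pi f -> (forall x, continuous f x) ->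
  exists B, forall x, Rabs (f x) <= B.
Proof.
intros Hp Hc. pose proof PI_RGT_0 as HPI.
assert (Hc' : forall c, 0 <= c <= 2 * PI -> continuity_pt f c).
{ intros c _. apply continuity_pt_filterlim. apply Hc. }
destruct (continuity_ab_maj f 0 (2*PI)) as [M [HM _]]; [lra|auto|].
destruct (continuity_ab_min f 0 (2*PI)) as [m [Hm _]]; [lra|auto|].
exists (Rmax (Rabs (f M)) (Rabs (f m))). intro x.
destruct (periodic_reduce f Hp x) as [y [Hy ->]].
specialize (HM y Hy); specialize (Hm y Hy).
unfold Rmax; destruct Rle_dec; unfold Rabs in *; repeat destruct Rcase_abs; lra.
Qed.

Lemma periodic_Derive f : periodic2pi f -> (forall x, ex_derive f x) -> periodic2pi (Derive f).
Proof.
intros Hp Hd x.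
assert (E : Derive (fun t => f (t + 2 * PI)) x = Derive f x) by (apply Derive_ext; auto).
assert (D : is_derive (fun t => t + 2 * PI) x 1) by (auto_derive; auto; ring).
rewrite <- E. rewrite (Derive_comp f (fun t => t + 2 * PI) x); auto.
- replace (Derive (fun t => t + 2 * PI) x) with 1. ring. symmetry; apply is_derive_unique; exact D.
- eexists; apply D.
Qed.

Lemma exp_le a b : a <= b -> exp a <= exp b.
Proof. intro h; destruct (Rle_lt_or_eq_dec a b h) as [h'|h'].
left; apply exp_increasing; auto. subst; lra. Qed.

Theorem mainTheorem15 (X : R -> R) :
  smooth X -> periodic2pi X ->
  (exists x, X x = 0) ->
  (forall x, X x = 0 -> Derive X x <> 0) ->
  exists sigma0, 0 < sigma0 /\
    forall sigma, 0 < sigma < sigma0 ->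
      exists eta : R -> R,
        smooth eta /\ periodic2pi eta /\
        (forall x, Kplus X x -> eta x = 1) /\
        (forall x, Kminus X x -> eta x = 0) /\
        (forall Phi, is_Xh_flow X Phi -> forall x xi,
           is_derive (fun t => eta (fst (Phi t (x, xi)))) 0 (X x * Derive eta x)) /\
        (forall x xi : R, Rabs (X x * Derive eta x) < sigma).
Proof.
intros HX Hper _ Hnd.
exists 1. split; [lra|]. intros sigma [Hs0 _].
assert (CX : forall n, Cn n X) by (intro n; apply smooth_Cn; exact HX).
assert (CDX : forall n, Cn n (Derive X)) by (intro n; exact (proj2 (CX (S n)))).
assert (dX : forall x, ex_derive X x) by exact (proj1 (CX 1%nat)).
set (v := fun x => Derive X x * Derive X x + X x * X x).
assert (vpos : forall x, 0 < v x).
{ intro x; unfold v. destruct (Req_dec (X x) 0) as [h|h].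
  - specialize (Hnd x h). rewrite h. assert (0 < Derive X x * Derive X x).
    { destruct (Rlt_or_le 0 (Derive X x)); [nra|]. assert (Derive X x < 0) by lra. nra. }
    lra.
  - assert (0 < X x * X x).
    { destruct (Rlt_or_le 0 (X x)); [nra|]. assert (X x < 0) by lra. nra. }
    nra. }
set (g := fun x => Derive X x * exp (- / 2 * ln (v x))).
assert (Cv : forall n, Cn n v).
{ intro n; unfold v; apply Cn_plus; apply Cn_mult; auto. }
assert (Cg : forall n, Cn n g).
{ intro n; unfold g. apply Cn_mult; auto.
  apply (Cn_comp n exp (fun x => - / 2 * ln (v x))). apply Cn_exp.
  apply Cn_mult. apply Cn_const. apply Cn_ln; auto. }
assert (DXper : periodic2pi (Derive X)) by (apply periodic_Derive; auto).
assert (gper : periodic2pi g).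
{ intro x; unfold g, v. rewrite !DXper, !Hper. reflexivity. }
assert (gb : forall x, Rabs (g x) <= 1).
{ intro x. unfold g.
  set (e := exp (- / 2 * ln (v x))).
  assert (ee : e * e = / v x).
  { unfold e. rewrite <- exp_plus. replace (- / 2 * ln (v x) + - / 2 * ln (v x)) with (- ln (v x)) by field.
    rewrite exp_Ropp, exp_ln; auto. }
  assert (epos : 0 < e) by apply exp_pos.
  specialize (vpos x).
  assert (Hd : Derive X x * Derive X x <= v x) by (unfold v; nra).
  assert (Hq : (Derive X x * e) * (Derive X x * e) <= 1).
  { replace ((Derive X x * e) * (Derive X x * e)) with ((Derive X x * Derive X x) * (e * e)) by ring.
    rewrite ee. apply Rmult_le_reg_r with (v x); auto.
    rewrite Rmult_assoc, Rinv_l; lra. }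
  apply Rabs_le. split; nra. }
destruct (periodic_bounded (Derive g)) as [G HG].
{ apply periodic_Derive; auto. exact (proj1 (Cg 1%nat)). }
{ intro x. exact (ex_derive_continuous (Derive g) x (proj1 (proj2 (Cg 2%nat)) x)). }
destruct (periodic_bounded (Derive X)) as [A HA]; auto.
{ intro x. exact (ex_derive_continuous (Derive X) x (proj1 (proj2 (CX 2%nat)) x)). }
destruct (periodic_bounded X) as [BX HBX]; auto.
{ intro x. exact (ex_derive_continuous X x (dX x)). }
assert (G0 : 0 <= G) by (pose proof (HG 0); pose proof (Rabs_pos (Derive g 0)); lra).
assert (A0 : 0 <= A) by (pose proof (HA 0); pose proof (Rabs_pos (Derive X 0)); lra).
assert (BX0 : 0 <= BX) by (pose proof (HBX 0); pose proof (Rabs_pos (X 0)); lra).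
set (delta := sigma / (4 * (A + 1))).
set (eps := sigma / (2 * (G + 1))).
assert (dpos : 0 < delta) by (unfold delta; apply Rdiv_lt_0_compat; lra).
assert (epos : 0 < eps) by (unfold eps; apply Rdiv_lt_0_compat; lra).
set (N := BX + eps + 1).
set (L := ln (N / eps)).
assert (Lpos : 0 < L).
{ unfold L. rewrite <- ln_1. apply ln_increasing; [lra|].
  unfold N. apply Rmult_lt_reg_r with eps; auto. unfold Rdiv. rewrite Rmult_assoc, Rinv_l; lra. }
assert (E1 : 1 < exp (L / delta)).
{ rewrite <- exp_0. apply exp_increasing. apply Rdiv_lt_0_compat; lra. }
set (s := eps * eps / (exp (L / delta) - 1)).
assert (spos : 0 < s) by (unfold s; apply Rdiv_lt_0_compat; nra).
set (P := fun x => exp (- delta * ln (1 + X x * X x * / s))).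
assert (Ppos : forall x, 0 < P x) by (intro; apply exp_pos).
assert (P1 : forall x, P x <= 1).
{ intro x; unfold P. apply Rle_trans with (exp 0); [|rewrite exp_0; lra]. apply exp_le.
  assert (0 <= ln (1 + X x * X x * / s)).
  { rewrite <- ln_1. apply ln_le; [lra|].
    assert (0 <= X x * X x * / s). apply Rmult_le_pos. nra. left; apply Rinv_0_lt_compat; auto. lra. }
  nra. }
assert (PX : forall x, P x * Rabs (X x) <= eps).
{ intro x. destruct (Rle_or_lt (Rabs (X x)) eps) as [h|h].
  - pose proof (P1 x); pose proof (Ppos x); pose proof (Rabs_pos (X x)); nra.
  - assert (Pe : P x <= eps / N).
    { unfold P. replace (eps / N) with (exp (- L)).
      2:{ unfold L. rewrite exp_Ropp, exp_ln. field. unfold N; lra.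
          apply Rdiv_lt_0_compat; unfold N; lra. }
      apply exp_le.
      assert (L / delta <= ln (1 + X x * X x * / s)).
      { rewrite <- (ln_exp (L / delta)). apply ln_le. apply exp_pos.
        replace (exp (L / delta)) with (1 + eps * eps * / s).
        2:{ unfold s. field. lra. }
        assert (eps * eps <= X x * X x).
        { revert h. unfold Rabs; destruct Rcase_abs; intro; nra. }
        assert (0 < / s) by (apply Rinv_0_lt_compat; auto).
        nra. }
      assert (L = delta * (L / delta)) by (field; lra).
      nra. }
    assert (Rabs (X x) <= N) by (unfold N; specialize (HBX x); lra).
    assert (0 < N) by (unfold N; lra).
    assert (eps / N * Rabs (X x) <= eps).
    { unfold Rdiv. replace (eps * / N * Rabs (X x)) with (eps * (Rabs (X x) / N)) by (unfold Rdiv; ring).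
      assert (Rabs (X x) / N <= 1).
      { apply Rmult_le_reg_r with N; auto. unfold Rdiv; rewrite Rmult_assoc, Rinv_l; lra. }
      nra. }
    pose proof (Rabs_pos (X x)). nra. }
assert (CP : forall n, Cn n P).
{ intro n; unfold P. apply (Cn_comp n exp (fun x => - delta * ln (1 + X x * X x * / s))).
  apply Cn_exp. apply Cn_mult. apply Cn_const. apply Cn_ln.
  apply Cn_plus. apply Cn_const. apply Cn_mult. apply Cn_mult; auto. apply Cn_const.
  intro x. assert (0 <= X x * X x * / s). apply Rmult_le_pos. nra. left; apply Rinv_0_lt_compat; auto. lra. }
set (eta := fun x => / 2 + - / 2 * (P x * g x)).
assert (Ceta : forall n, Cn n eta).
{ intro n; unfold eta. apply Cn_plus. apply Cn_const. apply Cn_mult. apply Cn_const. apply Cn_mult; auto. }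
assert (zero_val : forall x, X x = 0 -> eta x = / 2 - / 2 * (Derive X x * exp (- / 2 * ln (Derive X x * Derive X x)))).
{ intros x h. unfold eta, P, g, v. rewrite h.
  replace (1 + 0 * 0 * / s) with 1 by (field; lra). rewrite ln_1, Rmult_0_r, exp_0.
  replace (Derive X x * Derive X x + 0 * 0) with (Derive X x * Derive X x) by ring.
  field. }
assert (sq : forall d, d <> 0 -> d * exp (- / 2 * ln (d * d)) * (d * exp (- / 2 * ln (d * d))) = 1).
{ intros d hd. assert (0 < d * d). { destruct (Rlt_or_le 0 d); [nra|]. assert (d < 0) by lra. nra. }
  replace (d * exp (- / 2 * ln (d * d)) * (d * exp (- / 2 * ln (d * d)))) with
    ((d * d) * (exp (- / 2 * ln (d * d) + - / 2 * ln (d * d)))) by (rewrite exp_plus; ring).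
  replace (- / 2 * ln (d * d) + - / 2 * ln (d * d)) with (- ln (d * d)) by field.
  rewrite exp_Ropp, exp_ln; auto. field. lra. }
exists eta. split; [|split; [|split; [|split; [|split]]]].
- intros n x. apply Cn_smooth. apply Ceta.
- intro x. unfold eta, P. rewrite gper, Hper. reflexivity.
- intros x [h1 h2]. rewrite (zero_val x h1).
  assert (hd : Derive X x <> 0) by lra. specialize (sq _ hd).
  set (e := exp (- / 2 * ln (Derive X x * Derive X x))) in *.
  assert (0 < e) by apply exp_pos.
  assert (Derive X x * e < 0) by nra.
  assert (Derive X x * e = -1) by nra. rewrite H1. field.
- intros x [h1 h2]. rewrite (zero_val x h1).
  assert (hd : Derive X x <> 0) by lra. specialize (sq _ hd).
  set (e := exp (- / 2 * ln (Derive X x * Derive X x))) in *.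
  assert (0 < e) by apply exp_pos.
  assert (Derive X x * e > 0) by nra.
  assert (Derive X x * e = 1) by nra. rewrite H1. field.
- intros Phi HPhi x xi. destruct (HPhi (x, xi)) as [H0 Ht].
  destruct (Ht 0) as [Hf _]. rewrite H0 in Hf. simpl in Hf.
  assert (He : is_derive eta (fst (Phi 0 (x, xi))) (Derive eta x)).
  { rewrite H0; simpl. apply Derive_correct. exact (proj1 (Ceta 1%nat) x). }
  exact (is_derive_comp eta (fun t => fst (Phi t (x, xi))) 0 _ _ He Hf).
- intros x _.
  set (DP := P x * (- delta * ((Derive X x * X x + X x * Derive X x) * / s * / (1 + X x * X x * / s)))).
  assert (HDP : is_derive P x DP).
  { unfold DP, P. auto_derive. repeat split; auto.
    assert (0 <= X x * X x * / s). apply Rmult_le_pos. nra. left; apply Rinv_0_lt_compat; auto. lra.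
    rewrite !Rmult_1_l. apply Rmult_comm. }
  assert (Deq : Derive eta x = - / 2 * (DP * g x + P x * Derive g x)).
  { unfold eta.
    rewrite (Derive_plus (fun _ => / 2) (fun t => - / 2 * (P t * g t)) x).
    rewrite Derive_const, Derive_scal, Derive_mult.
    rewrite (is_derive_unique _ _ _ HDP). ring.
    eexists; exact HDP. exact (proj1 (Cg 1%nat) x).
    apply ex_derive_const.
    exact (proj1 (Cn_mult 1 _ _ (Cn_const 1 (- / 2)) (Cn_mult 1 _ _ (CP 1%nat) (Cg 1%nat))) x). }
  rewrite Deq.
  assert (XDP : Rabs (X x * DP) <= 2 * delta * A).
  { set (q := X x * X x * / s * / (1 + X x * X x * / s)).
    assert (0 <= X x * X x * / s). apply Rmult_le_pos. nra. left; apply Rinv_0_lt_compat; auto.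
    assert (q0 : 0 <= q). { unfold q. apply Rmult_le_pos; auto. left; apply Rinv_0_lt_compat; lra. }
    assert (q1 : q <= 1).
    { unfold q. apply Rmult_le_reg_r with (1 + X x * X x * / s). lra.
      rewrite Rmult_assoc, Rinv_l; lra. }
    replace (X x * DP) with (-2 * delta * (Derive X x * (P x * q))) by (unfold DP, q; field; repeat split; nra).
    pose proof (Ppos x); pose proof (P1 x). specialize (HA x).
    assert (0 <= P x * q <= 1). { split. apply Rmult_le_pos; lra. replace 1 with (1 * 1) by ring. apply Rmult_le_compat; lra. }
    rewrite Rabs_mult. replace (Rabs (-2 * delta)) with (2 * delta).
    2:{ rewrite Rabs_left; lra. }
    apply Rmult_le_compat_l; [lra|]. rewrite Rabs_mult.
    rewrite (Rabs_pos_eq (P x * q)) by lra.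
    pose proof (Rabs_pos (Derive X x)). nra. }
  assert (T2 : Rabs (P x * X x * Derive g x) <= eps * G).
  { rewrite Rabs_mult, Rabs_mult, (Rabs_pos_eq (P x)) by (left; apply Ppos).
    pose proof (PX x). specialize (HG x). pose proof (Rabs_pos (Derive g x)).
    pose proof (Rabs_pos (X x)). pose proof (Ppos x). nra. }
  assert (T1 : Rabs (X x * DP * g x) <= 2 * delta * A).
  { rewrite Rabs_mult. specialize (gb x). pose proof (Rabs_pos (g x)). pose proof (Rabs_pos (X x * DP)). nra. }
  replace (X x * (- / 2 * (DP * g x + P x * Derive g x))) with (- / 2 * (X x * DP * g x + P x * X x * Derive g x)) by ring.
  rewrite Rabs_mult. replace (Rabs (- / 2)) with (/ 2) by (rewrite Rabs_left; lra).
  pose proof (Rabs_triang (X x * DP * g x) (P x * X x * Derive g x)).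
  assert (delta * A < sigma / 4).
  { unfold delta. apply Rmult_lt_reg_r with (4 * (A + 1)). lra.
    replace (sigma / (4 * (A + 1)) * A * (4 * (A + 1))) with (sigma * A) by (field; lra).
    replace (sigma / 4 * (4 * (A + 1))) with (sigma * A + sigma) by field. lra. }
  assert (eps * G < sigma / 2).
  { unfold eps. apply Rmult_lt_reg_r with (2 * (G + 1)). lra.
    replace (sigma / (2 * (G + 1)) * G * (2 * (G + 1))) with (sigma * G) by (field; lra).
    replace (sigma / 2 * (2 * (G + 1))) with (sigma * G + sigma) by field. lra. }
  lra.
Qed.
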